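(* Let $q$ be a prime power and let $X$ be a polarity graph of the projective plane $PG(2,q)$ having $a$ absolute points (loops retained). Then every independent set $S$ of $X$ satisfies \[ |S|\le \frac{\sqrt q+\sqrt{q+4a\frac{q+\sqrt q+1}{q^2+q+1}}}{2\,\frac{q+\sqrt q+1}{q^2+q+1}}. \]
   Context: A polarity of $PG(2,q)$ is an incidence-preserving bijection $\sigma$ mapping points to lines and lines to points with $\sigma^2$ the identity (equivalently, an automorphism of order two of the point–line incidence graph of $PG(2,q)$ interchanging points and lines). The polarity graph $X$ has the $q^2+q+1$ points as vertices, with $x$ adjacent to $y$ iff $x$ is incident with the line $\sigma(y)$; a point $x$ with $x$ incident with $\sigma(x)$ is absolute and carries a loop. An independent set is a set of vertices no two distinct members of which are adjacent (absolute points may belong to it). *)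

(* Defs.v *)
From HB Require Import structures.
From mathcomp Require Import all_boot all_order all_algebra.
From mathcomp Require Import reals.
Set Implicit Arguments. Unset Strict Implicit. Unset Printing Implicit Defensive.
Import Order.TTheory GRing.Theory Num.Theory.
Local Open Scope ring_scope.

(* A point (resp. line) is a
   one-dimensional subspace of F^3, represented by its unique normalized
   spanning vector: nonzero, with first nonzero coordinate equal to 1. *)
Definition normalized (F : fieldType) (v : 'rV[F]_3) : bool :=
  (v != 0) &&
  [forall i : 'I_3,
     ([forall j : 'I_3, (j < i)%N ==> (v 0 j == 0)] && (v 0 i != 0))
       ==> (v 0 i == 1)].

Definition pvec (F : finFieldType) := {v : 'rV[F]_3 | normalized v}.
Definition point (F : finFieldType) : finType := pvec F.
Definition line (F : finFieldType) : finType := pvec F.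

Definition incident (F : finFieldType) (x : point F) (l : line F) : bool :=
  (val x *m (val l)^T) == 0.

Definition is_polarity (F : finFieldType)
  (sp : point F -> line F) (sl : line F -> point F) : Prop :=
  [/\ cancel sp sl, cancel sl sp &
      forall (x : point F) (l : line F), incident x l = incident (sl l) (sp x)].

Definition pol_adj (F : finFieldType) (sp : point F -> line F)
  (x y : point F) : bool := incident x (sp y).

Definition absolute_points (F : finFieldType) (sp : point F -> line F)
  : {set point F} := [set x | pol_adj sp x x].

Definition pol_independent (F : finFieldType) (sp : point F -> line F)
  (S : {set point F}) : Prop :=
  forall x y, x \in S -> y \in S -> x != y -> ~~ pol_adj sp x y.

(* Main.v *)
Require Import Defs.
From HB Require Import structures.
From mathcomp Require Import all_boot all_order all_algebra.
From mathcomp Require Import reals.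
From mathcomp Require Import ring zify lra.
Set Implicit Arguments. Unset Strict Implicit. Unset Printing Implicit Defensive.
Import Order.TTheory GRing.Theory Num.Theory.
Local Open Scope ring_scope.

Section Geo.
Variable F : finFieldType.
Definition o0 : 'I_3 := @Ordinal 3 0 isT.
Definition o1 : 'I_3 := @Ordinal 3 1 isT.
Definition o2 : 'I_3 := @Ordinal 3 2 isT.

Lemma ord3P (P : 'I_3 -> Prop) : P o0 -> P o1 -> P o2 -> forall i, P i.
Proof.
move=> H0 H1 H2 [[|[|[|m]]] Hi] //.
- by rewrite (_ : Ordinal Hi = o0) //; apply: val_inj.
- by rewrite (_ : Ordinal Hi = o1) //; apply: val_inj.
- by rewrite (_ : Ordinal Hi = o2) //; apply: val_inj.
Qed.

Lemma forall3 (P : pred 'I_3) : [forall i, P i] = [&& P o0, P o1 & P o2].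
Proof.
apply/forallP/and3P => [H|[? ? ?]]; first by split; apply: H.
exact: ord3P.
Qed.

Implicit Types u v w x y : 'rV[F]_3.
Notation c0 v := (v 0 o0).
Notation c1 v := (v 0 o1).
Notation c2 v := (v 0 o2).

Lemma vecP (u v : 'rV[F]_3) : c0 u = c0 v -> c1 u = c1 v -> c2 u = c2 v -> u = v.
Proof.
move=> H0 H1 H2; apply/rowP; exact: ord3P.
Qed.

Lemma vec0P (v : 'rV[F]_3) : (v == 0) = [&& c0 v == 0, c1 v == 0 & c2 v == 0].
Proof.
apply/eqP/and3P => [->|[/eqP ? /eqP ? /eqP ?]]; first by rewrite !mxE.
by apply: vecP; rewrite mxE.
Qed.

Definition dot (u v : 'rV[F]_3) : F := c0 u * c0 v + c1 u * c1 v + c2 u * c2 v.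

Lemma dot_mx (u v : 'rV[F]_3) : (u *m v^T) 0 0 = dot u v.
Proof.
rewrite !mxE !big_ord_recl big_ord0 !mxE addr0 addrA /dot.
by congr (_ * _ + _ * _ + _ * _); congr (_ _ _); apply: val_inj.
Qed.

Lemma incidentE (x : point F) (l : line F) : incident x l = (dot (val x) (val l) == 0).
Proof.
rewrite /incident -dot_mx; apply/eqP/eqP => [->|H]; first by rewrite mxE.
by apply/matrixP => i j; rewrite !ord1 H mxE.
Qed.

Lemma dotC u v : dot u v = dot v u.
Proof. rewrite /dot; ring. Qed.

Lemma dotZl c u v : dot (c *: u) v = c * dot u v.
Proof. rewrite /dot !mxE; ring. Qed.

Lemma dotDl u w v : dot (u + w) v = dot u v + dot w v.
Proof. rewrite /dot !mxE; ring. Qed.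

Definition nzc (v : 'rV[F]_3) : F :=
  if c0 v != 0 then c0 v else if c1 v != 0 then c1 v else c2 v.

Lemma normalizedE v : normalized v = (v != 0) && (nzc v == 1).
Proof.
rewrite /normalized /nzc forall3 !forall3 /=.
case: (v =P 0) => [->|/eqP vnz] //=.
move: vnz; rewrite vec0P.
by case: eqP => [->|_]; case: eqP => [->|_]; case: eqP => [->|_];
   rewrite ?eqxx //= ?andbT ?implybT.
Qed.


Lemma nzcZ c v : nzc (c *: v) = c * nzc v.
Proof.
rewrite /nzc !mxE.
case: (c =P 0) => [->|/eqP cnz]; first by rewrite !mul0r eqxx.
by rewrite !mulf_eq0 (negbTE cnz) /=; case: ifP => //; case: ifP.
Qed.

Lemma nzc_neq0 v : v != 0 -> nzc v != 0.
Proof.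
rewrite vec0P /nzc; case: ifP => //; case: ifP => // /negbFE-> /negbFE-> /=.
by [].
Qed.

Lemma normalized_neq0 v : normalized v -> v != 0.
Proof. by rewrite normalizedE => /andP[]. Qed.

Lemma normalized_nzc v : normalized v -> nzc v = 1.
Proof. by rewrite normalizedE => /andP[_ /eqP]. Qed.

Definition normalize v := (nzc v)^-1 *: v.

Lemma normalize_ok v : v != 0 -> normalized (normalize v).
Proof.
move=> vnz; have cnz := nzc_neq0 vnz.
rewrite normalizedE /normalize scaler_eq0 negb_or invr_eq0 cnz vnz /=.
by rewrite nzcZ mulVf.
Qed.

Lemma normalizeK v : v != 0 -> nzc v *: normalize v = v.
Proof.
move=> vnz; rewrite /normalize scalerA mulfV ?scale1r //; exact: nzc_neq0.
Qed.

Lemma normalized_prop u w c : normalized u -> normalized w -> u = c *: w -> u = w.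
Proof.
move=> nu nw e; have := normalized_nzc nu; rewrite e nzcZ normalized_nzc // mulr1.
by move=> ->; rewrite scale1r.
Qed.

Definition mkv (a b c : F) : 'rV[F]_3 := \row_(i < 3) nth 0 [:: a; b; c] i.

Lemma mkvE a b c : [/\ c0 (mkv a b c) = a, c1 (mkv a b c) = b & c2 (mkv a b c) = c].
Proof. by rewrite !mxE. Qed.

Definition cross (u w : 'rV[F]_3) : 'rV[F]_3 :=
  mkv (c1 u * c2 w - c2 u * c1 w) (c2 u * c0 w - c0 u * c2 w) (c0 u * c1 w - c1 u * c0 w).

Lemma dot_cross_l u w : dot u (cross u w) = 0.
Proof. by rewrite /dot /cross !mxE /=; ring. Qed.

Lemma dot_cross_r u w : dot w (cross u w) = 0.
Proof. by rewrite /dot /cross !mxE /=; ring. Qed.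

Lemma cross_cross v x y : cross v (cross x y) = dot v y *: x - dot v x *: y.
Proof. by apply: vecP; rewrite /dot /cross !mxE /=; ring. Qed.

Lemma cross0_prop u w : cross u w = 0 -> w != 0 -> exists c, u = c *: w.
Proof.
move=> e; have := e; move/eqP; rewrite vec0P /cross !mxE /= !subr_eq0 => /and3P[/eqP e0 /eqP e1 /eqP e2].
rewrite vec0P.
case: (c0 w =P 0) => [w0|/eqP w0] /=.
  case: (c1 w =P 0) => [w1|/eqP w1] /=.
    rewrite w0 w1 !mulr0 in e0 e1 e2 *.
    move=> w2; exists (c2 u / c2 w); apply: vecP; rewrite !mxE ?w0 ?w1 ?mulr0 ?divfK //.
    - by apply: (mulIf w2); rewrite mul0r e1.
    - by apply: (mulIf w2); rewrite mul0r -e0 mulrC.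
  move=> _; exists (c1 u / c1 w); apply: vecP; rewrite !mxE ?divfK //.
  - by apply: (mulIf w1); rewrite mulrAC divfK // e2 mulrC.
  - by apply: (mulIf w1); rewrite mulrAC divfK // mulrC e0.
move=> _; exists (c0 u / c0 w); apply: vecP; rewrite !mxE ?divfK //.
- by apply: (mulIf w0); rewrite mulrAC divfK // mulrC -e2 mulrC.
- by apply: (mulIf w0); rewrite mulrAC divfK // e1 mulrC.
Qed.

Lemma cross_neq0 u w : normalized u -> normalized w -> u != w -> cross u w != 0.
Proof.
move=> nu nw; apply: contraNN => /eqP e.
have [c ec] := cross0_prop e (normalized_neq0 nw).
by rewrite (normalized_prop nu nw ec).
Qed.


Lemma count_scale (P : pred 'rV[F]_3) :
  (forall c v, c != 0 -> P (c *: v) = P v) ->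
  #|[set v | (v != 0) && P v]| = (#|F|.-1 * #|[set x : point F | P (val x)]|)%N.
Proof.
move=> HP.
rewrite -(cardsC1 (0 : F)) -cardsX.
pose f := fun cp : F * point F => cp.1 *: val cp.2.
rewrite -(@card_in_imset _ _ f).
  apply: eq_card => v; rewrite inE; apply/andP/imsetP.
    move=> [vnz Pv]; exists (nzc v, Sub (normalize v) (normalize_ok vnz)).
      rewrite !inE /= nzc_neq0 //= /normalize HP //.
      by rewrite invr_eq0 nzc_neq0.
    by rewrite /f /= normalizeK.
  move=> [[c x]]; rewrite !inE /= => /andP[cnz Px] ->; rewrite /f /= HP //.
  by rewrite scaler_eq0 negb_or cnz normalized_neq0 //; exact: valP.
move=> [c x] [c' x']; rewrite !inE /= => /andP[cnz _] /andP[c'nz _].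
rewrite /f /= => e.
have ex : val x = (c^-1 * c') *: val x'.
  by rewrite -scalerA -e scalerA mulVf ?scale1r.
have exx : x = x'.
  by apply: val_inj; apply: (normalized_prop (valP x) (valP x') ex).
subst x'; congr (_, _); apply/eqP; rewrite -subr_eq0.
have : (c - c') *: val x == 0 by rewrite scalerBl e subrr.
by rewrite scaler_eq0 (negbTE (normalized_neq0 (valP x))) orbF.
Qed.

Lemma exists_dot1 l : l != 0 -> exists w, dot w l = 1.
Proof.
rewrite vec0P /dot.
case: (c0 l =P 0) => [l0|/eqP l0] /=.
  case: (c1 l =P 0) => [l1|/eqP l1] /= => [l2|_].
    by exists (mkv 0 0 (c2 l)^-1); rewrite !mxE /= !mul0r !add0r mulVf.
  by exists (mkv 0 (c1 l)^-1 0); rewrite !mxE /= !mul0r add0r addr0 mulVf.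
by exists (mkv (c0 l)^-1 0 0); rewrite !mxE /= !mul0r !addr0 mulVf.
Qed.

Lemma card_kernel l : l != 0 -> #|[set v | dot v l == 0]| = (#|F| ^ 2)%N.
Proof.
move=> lnz; have [w hw] := exists_dot1 lnz.
have Kt : forall t, #|[set v | dot v l == t]| = #|[set v | dot v l == 0]|.
  move=> t; rewrite -[RHS](card_imset _ (addIr (t *: w))).
  apply: eq_card => v; rewrite inE.
 apply/eqP/imsetP => [e|[v0]].
    exists (v - t *: w); last by rewrite subrK.
    by rewrite inE -scaleN1r dotDl dotZl dotZl hw e mulr1 mulN1r subrr.
  by rewrite inE => /eqP e ->; rewrite dotDl dotZl hw e add0r mulr1.
have tot : #|{: 'rV[F]_3}| = (#|F| * #|[set v | dot v l == 0%R]|)%N.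
  rewrite -[LHS]sum1_card (partition_big (fun v => dot v l) predT) //=.
  rewrite -[X in (_ * X)%N]muln1 -sum_nat_const; apply: eq_bigr => t _.
  by rewrite -(Kt t) -sum1_card muln1; apply: eq_bigl => v; rewrite inE.
move: tot; rewrite card_mx mul1n => /eqP.
rewrite (expnSr _ 2) mulnC eqn_pmul2l // => [/eqP //|].
by apply/card_gt0P; exists 0.
Qed.


Lemma card_F_gt1 : (1 < #|F|)%N.
Proof. by apply/card_gt1P; exists 0, 1; rewrite !inE eq_sym oner_neq0. Qed.

Lemma card_line (l : line F) : #|[set x : point F | incident x l]| = #|F|.+1.
Proof.
have lnz := normalized_neq0 (valP l).
have H := @count_scale (fun v => dot v (val l) == 0).
rewrite /= in H.
have : #|[set v | (v != 0) && (dot v (val l) == 0)]| = (#|F| ^ 2).-1.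
  rewrite -(card_kernel lnz) (cardsD1 0 [set v | dot v (val l) == 0]) inE.
  have -> : dot 0 (val l) = 0 by rewrite -(scale0r 0) dotZl mul0r.
  rewrite eqxx /=; apply: eq_card => v; rewrite !inE.
  by [].
rewrite H; last by move=> c v cnz; rewrite dotZl mulf_eq0 (negbTE cnz).
have -> : [set x : point F | dot (val x) (val l) == 0] = [set x | incident x l].
  by apply/setP => x; rewrite !inE incidentE.
have q2 := card_F_gt1.
move: (#|[set x | incident x l]|) => n; move: #|F| q2 => q q2 e.
have e' : ((q.-1) * n = (q.-1) * q.+1)%N.
  rewrite e; clear e; nia.
by apply/eqP; rewrite -(eqn_pmul2l (_ : 0 < q.-1)%N) ?e' //; case: q q2 {e e'} => [|[|]].
Qed.

Lemma card_points : #|{: point F}| = (#|F| ^ 2 + #|F| + 1)%N.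
Proof.
have H := @count_scale (fun v => true) (fun _ _ _ => erefl).
have : #|[set v : 'rV[F]_3 | (v != 0) && true]| = (#|F| ^ 3).-1.
  rewrite -(card_mx F 1 3) -(cardsC1 0); apply: eq_card => v; rewrite !inE andbT.
  by [].
rewrite H cardsT => e.
have q2 := card_F_gt1.
move: #|{: point F}| e => n; move: #|F| q2 => q q2 e.
have e' : ((q.-1) * n = (q.-1) * (q ^ 2 + q + 1))%N.
  rewrite e; clear e; nia.
by apply/eqP; rewrite -(eqn_pmul2l (_ : 0 < q.-1)%N) ?e' //; case: q q2 {e e'} => [|[|]].
Qed.

Lemma two_lines (l1 l2 : line F) : l1 != l2 ->
  #|[set x : point F | incident x l1 && incident x l2]| = 1%N.
Proof.
move=> ne.
have nev : val l1 != val l2 by [].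
have znz := cross_neq0 (valP l1) (valP l2) nev.
pose p : point F := Sub (normalize (cross (val l1) (val l2))) (normalize_ok znz).
have onp : forall l : line F, dot (val l) (cross (val l1) (val l2)) = 0 -> dot (val p) (val l) = 0.
  by move=> l h; rewrite /p SubK /normalize dotZl dotC h mulr0.
have p1 : dot (val p) (val l1) = 0 by apply: onp; rewrite dot_cross_l.
have p2 : dot (val p) (val l2) = 0 by apply: onp; rewrite dot_cross_r.
apply: (eq_card1 (x := p)) => x; rewrite !inE !incidentE.
case: (x =P p) => [->|/eqP xp]; first by rewrite p1 p2 eqxx.
apply/negP => /andP[/eqP x1 /eqP x2].
have xpv : val x != val p by [].
have wnz := cross_neq0 (valP x) (valP p) xpv.
have hl : forall l : line F, dot (val x) (val l) = 0 -> dot (val p) (val l) = 0 ->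
    exists c, val l = c *: cross (val x) (val p).
  move=> l hx hp; apply: cross0_prop => //.
  by rewrite cross_cross dotC hp dotC hx !scale0r subrr.
have [c1 e1] := hl l1 x1 p1.
have [c2 e2] := hl l2 x2 p2.
have c2nz : c2 != 0.
  by apply: contraNneq (normalized_neq0 (valP l2)) => c20; rewrite e2 c20 scale0r.
have : val l1 = (c1 / c2) *: val l2 by rewrite e2 scalerA divfK.
move/(normalized_prop (valP l1) (valP l2)) => /eqP.
by rewrite (negbTE nev).
Qed.

End Geo.

Lemma sum_bool (T : finType) (A : {pred T}) (P : pred T) :
  (\sum_(i in A) (P i : nat) = #|[set i in A | P i]|)%N.
Proof.
rewrite -sum1_card [RHS]big_mkcond [LHS]big_mkcond; apply: eq_bigr => i _.
by rewrite inE; case: (i \in A); case: (P i).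
Qed.

Section Graph.
Variables (F : finFieldType) (sp : point F -> line F) (sl : line F -> point F).
Hypothesis Hpol : is_polarity sp sl.
Variable S : {set point F}.
Hypothesis Hind : pol_independent sp S.

Local Notation adj := (pol_adj sp).
Local Notation q := #|F|.
Local Notation s := #|S|.

Lemma adj_sym x y : adj x y = adj y x.
Proof.
case: Hpol => spK slK inc.
by rewrite /pol_adj inc spK.
Qed.

Lemma adjE x y : adj x y = incident y (sp x).
Proof. by rewrite adj_sym. Qed.

Lemma deg x : #|[set y | adj x y]| = q.+1.
Proof.
rewrite -(card_line (sp x)); apply: eq_card => y; by rewrite !inE adjE.
Qed.

Lemma common x x' : x != x' -> #|[set y | adj x y && adj x' y]| = 1%N.
Proof.
case: Hpol => spK _ _ ne.
rewrite -(@two_lines _ (sp x) (sp x')); last first.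
  by apply: contra ne => /eqP e; rewrite -(spK x) e spK.
by apply: eq_card => y; rewrite !inE !adjE.
Qed.

Definition d y := (\sum_(x in S) (adj x y : nat))%N.

Lemma E1 : (\sum_y d y = s * q.+1)%N.
Proof.
rewrite /d exchange_big /= -sum_nat_const; apply: eq_bigr => x _.
rewrite -(deg x) -[RHS](sum_bool predT); apply: eq_bigr => y _.
by [].
Qed.

Lemma E2 : (\sum_y (d y) ^ 2 = s * (q + s))%N.
Proof.
rewrite /d.
under eq_bigr => y _ do rewrite expnS expn1 big_distrlr /=.
rewrite exchange_big /= -sum_nat_const; apply: eq_big => // x xS.
rewrite exchange_big /=.
rewrite (bigD1 x) //=.
have -> : (\sum_y ((adj x y : nat) * (adj x y : nat)) = q.+1)%N.
  transitivity #|[set y | adj x y]|; last exact: deg.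
  by rewrite -(sum_bool predT); apply: eq_bigr => y _; rewrite mulnb andbb.
rewrite (eq_bigr (fun _ => 1%N)); last first.
  move=> x' /andP[_ ne]; transitivity #|[set y | adj x y && adj x' y]|; last first.
    by apply: common; rewrite eq_sym.
  by rewrite -(sum_bool predT); apply: eq_bigr => y _; rewrite mulnb.
rewrite sum1_card (cardD1 x S) xS.
rewrite add1n addSnnS.
congr (_ + _.+1)%N; apply: eq_card => i; by rewrite !inE andbC.
Qed.

Lemma E3 : (\sum_(y in S) d y <= #|absolute_points sp|)%N.
Proof.
rewrite (eq_bigr (fun y => (adj y y : nat))); last first.
  move=> y yS; rewrite /d (bigD1 y) //= big1 ?addn0 //.
  move=> x /andP[xS ne]; by rewrite (negbTE (Hind xS yS ne)).
rewrite sum_bool; apply: subset_leq_card; apply/subsetP => y.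
by rewrite !inE => /andP[_ ->].
Qed.

End Graph.

Section Real.
Variables (R : realType) (F : finFieldType) (sp : point F -> line F) (sl : line F -> point F).
Hypothesis Hpol : is_polarity sp sl.
Variable S : {set point F}.
Hypothesis Hind : pol_independent sp S.

Lemma quad_ineq (Q r aS N s : R) :
  Q = (#|F|)%:R -> r = Num.sqrt Q -> aS = (\sum_(y in S) d sp S y)%:R ->
  N = Q ^+ 2 + Q + 1 -> s = (#|S|)%:R ->
  0 <= 2 * r * (r * s + aS - (Q + r + 1) / N * s ^+ 2).
Proof.
move=> eQ er eaS eN es.
have Q0 : 0 <= Q by rewrite eQ ler0n.
have hr : Q = r ^+ 2 by rewrite er sqr_sqrtr.
have N0 : N != 0 by rewrite eN lt0r_neq0 // ltr_wpDl ?addr_ge0 ?sqr_ge0 // ltr01.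
pose D y : R := (d sp S y)%:R.
pose E y : R := ((y \in S) : nat)%:R.
pose c := s * (Q + 1 + r) / N.
have sq : 0 <= \sum_(y : point F) (D y + r * E y - c) ^+ 2.
  by apply: sumr_ge0 => y _; apply: sqr_ge0.
have ex : forall y, (D y + r * E y - c) ^+ 2 = D y ^+ 2 + (2 * r) * (E y * D y)
     + (- (2 * c)) * D y + Q * E y + (- (2 * r * c)) * E y + c ^+ 2.
  move=> y; rewrite hr /E; case: (y \in S) => /=; ring.
rewrite (eq_bigr _ (fun y _ => ex y)) in sq.
rewrite !big_split /= -!mulr_sumr sumr_const in sq.
have sD2 : \sum_y D y ^+ 2 = (#|S| * (#|F| + #|S|))%:R.
  by rewrite -(E2 Hpol S) natr_sum; apply: eq_bigr => y _; rewrite natrX.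
have sED : \sum_y E y * D y = aS.
  rewrite eaS natr_sum [RHS]big_mkcond; apply: eq_bigr => y _.
  by rewrite /E /D; case: (y \in S); rewrite /= ?mul1r ?mul0r.
have sD : \sum_y D y = (#|S| * #|F|.+1)%:R.
  by rewrite -(E1 Hpol S) natr_sum.
have sE : \sum_y E y = s.
  by rewrite es /E -natr_sum sum_bool; congr (_%:R); apply: eq_card => y; rewrite !inE.
have cN : (#|{: point F}|) = (#|F| ^ 2 + #|F| + 1)%N := card_points F.
rewrite sD2 sED sD sE cN in sq.
move: sq; rewrite -[N^-1 *+ _]mulr_natr !natrM !natrD natrX -[(#|F|.+1)%:R]natr1 -eQ -es -eN.
move=> sq; apply: (le_trans sq); rewrite le_eqVlt; apply/orP; left; apply/eqP.
rewrite /c; move: N0; rewrite eN hr => N0; field.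
by [].
Qed.
End Real.

Unset Implicit Arguments.
Theorem mainTheorem9 (R : realType) (F : finFieldType)
  (sp : point F -> line F) (sl : line F -> point F)
  (Hpol : is_polarity sp sl) (S : {set point F}) :
  pol_independent sp S ->
  let q : R := (#|F|)%:R in
  let a : R := (#|absolute_points sp|)%:R in
  let b : R := (q + Num.sqrt q + 1) / (q ^+ 2 + q + 1) in
  (#|S|)%:R <= (Num.sqrt q + Num.sqrt (q + 4 * a * b)) / (2 * b).
Proof.
move=> Hind; cbv zeta.
set q : R := (#|F|)%:R.
set a : R := (#|absolute_points sp|)%:R.
set b : R := (q + Num.sqrt q + 1) / (q ^+ 2 + q + 1).
have Hq := @quad_ineq R F sp sl Hpol S q (Num.sqrt q)
   ((\sum_(y in S) d sp S y)%:R) (q ^+ 2 + q + 1) (#|S|%:R) erefl erefl erefl erefl erefl.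
rewrite -/b in Hq.
set r := Num.sqrt q in Hq *; set s : R := (#|S|)%:R in Hq *.
have q2 : 1 < q by rewrite /q ltr1n card_F_gt1.
have q0 : 0 <= q by rewrite ltW // (lt_trans ltr01).
have r0 : 0 < r by rewrite /r sqrtr_gt0 (lt_trans ltr01).
have hr : q = r ^+ 2 by rewrite /r sqr_sqrtr.
have b0 : 0 < b.
  have qp : 0 < q by rewrite (lt_trans ltr01).
  have q2p : 0 < q ^+ 2 by rewrite exprn_gt0.
  have r0' : 0 < Num.sqrt q := r0.
  rewrite /b divr_gt0 //; lra.
have H1 : 0 <= r * s + (\sum_(y in S) d sp S y)%:R - b * s ^+ 2.
  by move: Hq; rewrite pmulr_rge0 // mulr_gt0.
have aSa : ((\sum_(y in S) d sp S y)%:R : R) <= a.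
  by rewrite /a ler_nat E3.
have H2 : 0 <= r * s + a - b * s ^+ 2.
  apply: (le_trans H1); rewrite lerD2r lerD2l //.
have a0 : 0 <= a by rewrite ler0n.
have D0 : 0 <= q + 4 * a * b.
  apply: addr_ge0 => //; apply: mulr_ge0; [apply: mulr_ge0 => //; exact: ler0n | exact: ltW].
rewrite ler_pdivlMr; last by apply: mulr_gt0 => //; rewrite ltr0n.
have t2 : (s * (2 * b) - r) ^+ 2 <= q + 4 * a * b.
  rewrite -subr_ge0.
  have -> : q + 4 * a * b - (s * (2 * b) - r) ^+ 2 = 4 * b * (r * s + a - b * s ^+ 2).
    by rewrite hr; ring.
  by rewrite mulr_ge0 // mulr_ge0 // ltW.
have : s * (2 * b) - r <= Num.sqrt (q + 4 * a * b).
  by apply: (le_trans (ler_norm _)); rewrite -sqrtr_sqr ler_sqrt.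
move=> h; lra.
Qed.
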